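(* Let $k$ be an algebraically closed field of characteristic $0$, $d\ge3$, $n\ge1$, and let $V_n$ have basis $v_1,\dots,v_n$ with symmetric $d$-linear form $\Theta_d(v_{i_1},\dots,v_{i_d})=1$ if $i_1+\dots+i_d=(d-1)n+1$ and $0$ otherwise. Let $\mathcal{L}(n,d)=\{L\in\mathfrak{gl}(V_n):\sum_{i=1}^d\Theta_d(u_1,\dots,L(u_i),\dots,u_d)=0\ \forall u_j\}$. Then every element of $\mathcal{L}(n,d)$ is upper triangular with respect to the basis $v_1,\dots,v_n$ (i.e. maps $v_i$ into $\mathrm{span}\{v_1,\dots,v_i\}$); hence $\mathcal{L}(n,d)$ is solvable. *)

(* Defs.v *)
From HB Require Import structures.
From mathcomp Require Import all_boot all_order all_algebra.
Set Implicit Arguments. Unset Strict Implicit. Unset Printing Implicit Defensive.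
Import GRing.Theory.
Local Open Scope ring_scope.

(* V_n = column vectors 'cV[k]_n, basis vector v_(i+1) = delta at index i : 'I_n. *)
Definition Theta (k : fieldType) (n d : nat) (u : 'I_d -> 'cV[k]_n) : k :=
  \sum_(t : {ffun 'I_d -> 'I_n} | (\sum_(j < d) (t j).+1)%N == ((d - 1) * n + 1)%N)
     \prod_(j < d) u j (t j) ord0.

Definition in_Lnd (k : fieldType) (n d : nat) (L : 'M[k]_n) : Prop :=
  forall u : 'I_d -> 'cV[k]_n,
    \sum_(i < d) Theta (fun j => if j == i then L *m u j else u j) = 0.

(* Upper triangular w.r.t. v_1..v_n: L v_i in span{v_1..v_i}, i.e. the
   v_j-coefficient (L j i) of L v_i vanishes for j > i. *)
Definition upper_triangular (k : fieldType) (n : nat) (L : 'M[k]_n) : Prop :=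
  forall i j : 'I_n, (i < j)%N -> L j i = 0.

Fixpoint derived (k : fieldType) (n : nat) (P : 'M[k]_n -> Prop) (m : nat)
  : 'M[k]_n -> Prop :=
  match m with
  | 0 => P
  | m'.+1 => fun Z => exists s : seq (k * 'M[k]_n * 'M[k]_n),
       (forall p, p \in s -> derived P m' p.1.2 /\ derived P m' p.2) /\
       Z = \sum_(p <- s) p.1.1 *: (p.1.2 *m p.2 - p.2 *m p.1.2)
  end.

Definition lie_solvable (k : fieldType) (n : nat) (P : 'M[k]_n -> Prop) : Prop :=
  exists m, forall Z, derived P m Z -> Z = 0.

(* Main.v *)
Require Import Defs.
From mathcomp Require Import all_boot all_order all_algebra.
From mathcomp Require Import ring zify.
Set Implicit Arguments. Unset Strict Implicit. Unset Printing Implicit Defensive.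
Import GRing.Theory.
Local Open Scope ring_scope.

Lemma sum_upd (k : fieldType) (n d : nat) (i : 'I_d) (a : 'I_d -> 'I_n)
  (G : {ffun 'I_d -> 'I_n} -> k) :
  (forall t, G t != 0 -> t = [ffun j => if j == i then t i else a j]) ->
  \sum_t G t = \sum_r G [ffun j => if j == i then r else a j].
Proof.
move=> hG.
have -> : \sum_r G [ffun j => if j == i then r else a j] =
  \sum_r \sum_(t | t == [ffun j => if j == i then r else a j]) G t.
  by apply: eq_bigr => r _; rewrite big_pred1_eq.
rewrite [RHS](exchange_big_dep xpredT) //=; apply: eq_bigr => t _.
have [->|nz] := eqVneq (G t) 0; first by rewrite big1.
have ht := hG t nz.
rewrite (eq_bigl (fun r => r == t i)) ?big_pred1_eq // => r.
apply/eqP/eqP => [->|->]; last by [].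
by rewrite ffunE eqxx.
Qed.

Lemma Theta_basis (k : fieldType) (n d : nat) (i : 'I_d) (a : 'I_d -> 'I_n)
  (L : 'M[k]_n) :
  Theta (fun j => if j == i then L *m delta_mx (a j) 0 else delta_mx (a j) 0)
  = \sum_(r < n | ((r.+1 + \sum_(j < d | j != i) (a j).+1) == (d - 1) * n + 1)%N)
      L r (a i).
Proof.
rewrite /Theta big_mkcond /= (@sum_upd _ _ _ i a).
  rewrite [RHS]big_mkcond /=; apply: eq_bigr => r _.
  have -> : (\sum_(j < d) ([ffun j0 => if j0 == i then r else a j0] j).+1)%N
      = (r.+1 + \sum_(j < d | j != i) (a j).+1)%N.
    rewrite (bigD1 i) //= ffunE eqxx; congr addn.
    by apply: eq_bigr => j hj; rewrite ffunE (negbTE hj).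
  case: ifP => // _.
  rewrite (bigD1 i) //= ffunE !eqxx -colE mxE big1 ?mulr1 // => j hj.
  by rewrite ffunE (negbTE hj) mxE !eqxx.
move=> t; case: ifP => _; last by rewrite eqxx.
move=> nz; apply/ffunP => j; rewrite ffunE.
case: eqP => [->//|/eqP hji].
apply/eqP; apply: contraNT nz => hne.
rewrite (bigD1 j) //= (negbTE hji) mxE (negbTE hne) /= mul0r //.
Qed.
Definition yfun (k : fieldType) (n' : nat) (L : 'M[k]_n'.+1) (Q x : nat) : k :=
  if (Q - x < n'.+1)%N then L (inord (Q - x)) (inord (n' - x)) else 0.

Lemma Lnd_sum (k : fieldType) (n' d : nat) (L : 'M[k]_n'.+1) :
  in_Lnd d L -> forall q : 'I_d -> nat, (forall j, q j <= n')%N ->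
  \sum_(i < d) yfun L (\sum_j q j)%N (q i) = 0.
Proof.
move=> hL q hq.
pose a j : 'I_n'.+1 := inord (n' - q j).
have ha : forall j, (a j : nat) = (n' - q j)%N.
  by move=> j; rewrite /a inordK // ltnS leq_subr.
rewrite -[RHS](hL (fun j => delta_mx (a j) 0)); apply: eq_bigr => i _.
rewrite Theta_basis.
set R := (\sum_(j < d | j != i) q j)%N.
have eQ : (\sum_j q j = q i + R)%N by rewrite (bigD1 i).
have eS : (\sum_(j < d | j != i) (a j).+1 + R = (d - 1) * n'.+1)%N.
  rewrite /R -big_split /=.
  rewrite (eq_bigr (fun _ => n'.+1)) => [|j _]; last first.
    by rewrite ha; have := hq j; lia.
  rewrite (eq_bigl (fun j => j \in predC1 i)) // sum_nat_const cardC1 card_ord.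
  by rewrite subn1.
rewrite /yfun eQ.
have -> : (q i + R - q i = R)%N by lia.
case: ifP => hR.
  rewrite (eq_bigl (fun r => r == inord R)) ?big_pred1_eq // => r.
  rewrite -val_eqE /= inordK //; move: eS; set S := (\sum_(j < d | j != i) _)%N; set D := ((d - 1) * _)%N.
  clearbody R S D; move=> eS; apply/eqP/eqP; lia.
move/negbT: hR; rewrite -leqNgt => hR.
rewrite big_pred0 // => r; apply/negbTE/eqP; have := ltn_ord r; lia.
Qed.
Lemma key (k : fieldType) (hc : forall p, (p.+1)%:R != 0 :> k) (y : nat -> k)
  (m N : nat) (hm : (0 < m)%N) (h0 : forall q, (q < m)%N -> y q = 0)
  (hT : forall a b c, (a <= N)%N -> (b <= N)%N -> (c <= N)%N ->
     (a + b + c = m + N)%N -> y a + y b + y c = 0) :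
  forall q, (q <= N)%N -> y q = 0.
Proof.
move=> q hq; case: (ltnP q m) => hqm; first exact: h0.
have h2 : (2%:R : k) != 0 by apply: (hc 1%N).
have h3 : (3%:R : k) != 0 by apply: (hc 2%N).
case: (ltnP N (2 * m)) => hc2.
  have e1 : forall x, (m <= x <= N)%N -> y m + y x = 0.
    move=> x /andP [h1 h2']; have := hT m x (N - x)%N; rewrite (h0 (N - x)%N) ?addr0; last by lia.
    by apply; lia.
  have ym : y m = 0.
    have := e1 m; rewrite -mulr2n -mulr_natr => /(_ _)/eqP; rewrite mulf_eq0 (negbTE h2) orbF.
    by move=> H; apply/eqP/H; lia.
  by have := e1 q; rewrite ym add0r; apply; lia.
set c := (N - 2 * m)%N.
have step : forall i, (i < c)%N -> y (m + i.+1)%N = y (m + i)%N + y (m + 1)%N - y m.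
  move=> i hi.
  have t1 := hT (m + i)%N (m + 1)%N (m + c - i.+1)%N.
  have t2 := hT (m + c - i.+1)%N m (m + i.+1)%N.
  have e1 : y (m + i)%N + y (m + 1)%N + y (m + c - i.+1)%N = 0 by apply: t1; lia.
  have e2 : y (m + c - i.+1)%N + y m + y (m + i.+1)%N = 0 by apply: t2; lia.
  set A := y (m + i.+1)%N in e2 *; set B := y (m + c - i.+1)%N in e1 e2 *.
  set C := y (m + i)%N in e1 *; set D := y (m + 1)%N in e1 *.
  have -> : A = (B + y m + A) - B - y m by ring.
  rewrite e2.
  have -> : B = (C + D + B) - C - D by ring.
  rewrite e1; ring.
pose b := y (m + 1)%N - y m.
have lin : forall i, (i <= c)%N -> y (m + i)%N = y m + i%:R * b.
  elim=> [|i IH] hi; first by rewrite addn0 mul0r addr0.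
  rewrite step // IH; last by lia.
  rewrite /b mulrS; ring.
have e3 : y m + y m + y (m + c)%N = 0 by apply: hT; lia.
have e4 : y (m + 1)%N + y (m + c)%N + y (m - 1)%N = 0 by apply: hT; lia.
rewrite (h0 (m - 1)%N) ?addr0 in e4; last by lia.
rewrite lin // in e3 e4.
have e5 : y (m + 1)%N = y m + b by rewrite /b; ring.
rewrite e5 in e4.
have hb : (c + 3)%:R * b = 0.
  have -> : (c + 3)%:R * b = 3%:R * (y m + b + (y m + c%:R * b)) - 2%:R * (y m + y m + (y m + c%:R * b)).
    rewrite natrD; ring.
  by rewrite e3 e4 !mulr0 subr0.
have b0 : b = 0.
  move/eqP: hb; rewrite mulf_eq0 => /orP [|/eqP //].
  by rewrite addn3 (negbTE (hc _)).
have ym : y m = 0.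
  move: e3; rewrite b0 mulr0 addr0 => /eqP.
  have -> : y m + y m + y m = 3%:R * y m by ring.
  by rewrite mulf_eq0 (negbTE h3) /= => /eqP.
case: (leqP (q - m)%N c) => hqc.
  have := lin (q - m)%N hqc; rewrite ym b0 mulr0 addr0.
  by have -> : (m + (q - m) = q)%N by lia.
have := hT m q (N - q)%N; rewrite ym add0r (h0 (N - q)%N) ?addr0; last by lia.
by apply; lia.
Qed.
Definition lev (k : fieldType) (n s : nat) (Z : 'M[k]_n) : Prop :=
  forall i j : 'I_n, (j < i + s)%N -> Z i j = 0.

Lemma lev_mul (k : fieldType) (n a b : nat) (X Y : 'M[k]_n) :
  lev a X -> lev b Y -> lev (a + b) (X *m Y).
Proof.
move=> hX hY i j hij; rewrite mxE big1 // => l _.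
case: (ltnP l (i + a)) => hl; first by rewrite hX ?mul0r.
by rewrite hY ?mulr0 //; lia.
Qed.

Lemma lev_mono (k : fieldType) (n a b : nat) (X : 'M[k]_n) :
  (b <= a)%N -> lev a X -> lev b X.
Proof. by move=> hba hX i j hij; apply: hX; lia. Qed.

Lemma lev_comm0 (k : fieldType) (n : nat) (X Y : 'M[k]_n) :
  lev 0 X -> lev 0 Y -> lev 1 (X *m Y - Y *m X).
Proof.
move=> hX hY i j hij.
have E : (X *m Y - Y *m X) i j = (X *m Y) i j - (Y *m X) i j by rewrite !mxE.
rewrite E.
case: (ltnP j i) => hji.
  rewrite (lev_mul hX hY) ?(lev_mul hY hX) ?subrr //; lia.
rewrite !mxE.
have eij : j = i by apply: ord_inj; lia.
subst j.
have dg : forall (A B : 'M[k]_n), lev 0 A -> lev 0 B ->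
    \sum_(l < n) A i l * B l i = A i i * B i i.
  move=> A B hA hB; rewrite (bigD1 i) //= big1 ?addr0 // => l hl.
  case: (ltnP l i) => hli; first by rewrite hA ?mul0r //; lia.
  by rewrite hB ?mulr0 //; have : l != i := hl; rewrite -val_eqE /=; lia.
by rewrite !dg // mulrC subrr.
Qed.

Lemma lev_sum (k : fieldType) (n s : nat) (S : seq (k * 'M[k]_n * 'M[k]_n)) :
  (forall p, p \in S -> lev s (p.1.2 *m p.2 - p.2 *m p.1.2)) ->
  lev s (\sum_(p <- S) p.1.1 *: (p.1.2 *m p.2 - p.2 *m p.1.2)).
Proof.
elim: S => [|p S IH] hS i j hij; first by rewrite big_nil mxE.
rewrite big_cons [LHS]mxE [X in X + _]mxE (hS p (mem_head _ _) i j hij) mulr0 add0r IH //.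
by move=> p' hp'; apply: hS; rewrite in_cons hp' orbT.
Qed.

Lemma derived_lev (k : fieldType) (n : nat) (P : 'M[k]_n -> Prop) :
  (forall L, P L -> lev 0 L) -> forall m Z, derived P m Z -> lev m Z.
Proof.
move=> hP; elim=> [|m IH] Z /=; first exact: hP.
move=> [S [hS ->]]; apply: lev_sum => p /hS [h1 h2].
clear hS; case: m IH h1 h2 => [|m] IH h1 h2.
  by apply: lev_comm0; apply: IH.
apply: (@lev_mono _ _ ((m.+1) + (m.+1))%N); first by lia.
have := lev_mul (IH _ h1) (IH _ h2); have := lev_mul (IH _ h2) (IH _ h1).
move=> l1 l2 i j hij.
have E : (p.1.2 *m p.2 - p.2 *m p.1.2) i j = (p.1.2 *m p.2) i j - (p.2 *m p.1.2) i j.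
  by rewrite !mxE.
by rewrite E l1 ?l2 ?subrr.
Qed.
Theorem proposition3p5 (k : closedFieldType) (n d : nat)
  (hchar : [pchar k] =i pred0) (hd : (3 <= d)%N) (hn : (1 <= n)%N) :
  (forall L : 'M[k]_n, in_Lnd d L -> upper_triangular L) /\
  lie_solvable (@in_Lnd k n d).
Proof.
have hc : forall p, (p.+1)%:R != 0 :> k by move=> p; rewrite ((pcharf0P k).1 hchar).
have P1 : forall L : 'M[k]_n, in_Lnd d L -> upper_triangular L.
  case: n hn => [//|n'] _ L hL i j hij.
  case: d hd hL => [|[|[|d']]] // _ hL.
  pose Q := (j + n' - i)%N.
  have hi : (i <= n')%N by have := ltn_ord i; lia.
  have hj : (j <= n')%N by have := ltn_ord j; lia.
  have hT : forall a b c, (a <= n')%N -> (b <= n')%N -> (c <= n')%N ->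
      (a + b + c = (j - i) + n')%N ->
      yfun L Q a + yfun L Q b + yfun L Q c = 0.
    move=> a b c ha hb hc' habc.
    pose q := fun j0 : 'I_(d'.+3) => nth 0%N [:: a; b; c] j0.
    have hq : forall j0, (q j0 <= n')%N.
      move=> j0; rewrite /q; case: (nat_of_ord j0) => [|[|[|x]]] //=; by rewrite nth_nil.
    have := Lnd_sum hL hq.
    have hs : (\sum_j0 q j0 = Q)%N.
      rewrite !big_ord_recl big1 => [|i0 _]; last by rewrite /q nth_default //= !lift0.
      rewrite /q /= ?lift0 /=; rewrite /Q; lia.
    rewrite hs !big_ord_recl big1 => [|i0 _]; last first.
      rewrite /q nth_default; last by rewrite /= ?lift0.
      rewrite /yfun subn0; case: ifP => // h; exfalso; move: h; rewrite /Q; lia.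
    by rewrite /q /= ?lift0 /= addr0 addrA.
  have := key (m := (j - i)%N) (N := n') (y := yfun L Q) (q := (n' - i)%N) hc _ _ hT _.
  rewrite /yfun.
  have -> : (Q - (n' - i) = j)%N by rewrite /Q; lia.
  have -> : (n' - (n' - i) = i)%N by lia.
  rewrite ltn_ord !inord_val => -> //.
  - by lia.
  - move=> x hx; rewrite /yfun; case: ifP => // h; exfalso; move: h; rewrite /Q; lia.
  - by rewrite leq_subr.
split => //.
exists n => Z hZ.
have := derived_lev (P := @in_Lnd k n d) _ hZ.
move=> /(_ _) hl; apply/matrixP => i j; rewrite mxE; apply: hl.
  by move=> L /P1 hL i0 j0 h; apply: hL; lia.
by have := ltn_ord j; lia.
Qed.
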